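(* Let $K\subset\mathbb{R}^n$ and $C\subset\mathbb{R}^m$ be nonempty, convex, closed and bounded sets, and let $f,h:\mathbb{R}^n\times\mathbb{R}^m\to\mathbb{R}$ be continuous functions such that, for every $y\in K$, $f(y,\cdot)$ and $h(y,\cdot)$ are convex, and such that $f$ takes only positive values. Fix $\varepsilon>0$ and, for $y\in K$, let $\mathcal{S}_\varepsilon(y)=\operatorname{argmin}\{h(y,z)+\varepsilon f^2(y,z)\mid z\in C\}$. Then the map $v_\varepsilon: y\mapsto\{f(y,x)\mid x\in\mathcal{S}_\varepsilon(y)\}$, defined on $K$, is single-valued, and the resulting real-valued function $v_\varepsilon:K\to\mathbb{R}$ is continuous.
   Context: $f^2(y,z)$ denotes $(f(y,z))^2$. *)

(* Defs.v *)
From HB Require Import structures.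
From mathcomp Require Import all_boot all_order all_algebra.
From mathcomp Require Import all_classical all_reals all_analysis.
Set Implicit Arguments. Unset Strict Implicit. Unset Printing Implicit Defensive.
Import Order.TTheory GRing.Theory Num.Theory.
Import numFieldNormedType.Exports.
Local Open Scope classical_set_scope.
Local Open Scope ring_scope.

Definition convex_set_rV (R : realType) (m : nat) (C : set 'rV[R]_m) : Prop :=
  forall x y (t : R), C x -> C y -> 0 <= t -> t <= 1 ->
    C (t *: x + (1 - t) *: y).

Definition convex_fun_rV (R : realType) (m : nat) (g : 'rV[R]_m -> R) : Prop :=
  forall x y (t : R), 0 <= t -> t <= 1 ->
    g (t *: x + (1 - t) *: y) <= t * g x + (1 - t) * g y.

Definition argmin_on (R : realType) (m : nat) (C : set 'rV[R]_m)
  (g : 'rV[R]_m -> R) : set 'rV[R]_m :=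
  [set z | C z /\ forall w, C w -> g z <= g w].

(* Main.v *)
Require Import Defs.
From HB Require Import structures.
From mathcomp Require Import all_boot all_order all_algebra.
From mathcomp Require Import all_classical all_reals all_analysis.
From mathcomp Require Import ring lra.
Import Order.TTheory GRing.Theory Num.Theory.
Import numFieldNormedType.Exports.
Local Open Scope classical_set_scope.
Local Open Scope ring_scope.
Lemma key_ineq (R : realType) m (C : set 'rV[R]_m) (F H : 'rV[R]_m -> R) (eps : R) :
  convex_set_rV C -> convex_fun_rV F -> convex_fun_rV H -> (forall z, 0 < F z) -> 0 < eps ->
  forall z0, argmin_on C (fun z => H z + eps * F z ^+ 2) z0 ->
  forall z, C z -> eps * (F z - F z0) ^+ 2 <= 2 * ((H z + eps * F z ^+ 2) - (H z0 + eps * F z0 ^+ 2)).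
Proof.
move=> cC cF cH Fp ep z0 [Cz0 minz0] z Cz.
have h2 : (0:R) <= 2^-1 by rewrite invr_ge0.
have h2' : (2^-1:R) <= 1 by rewrite invf_le1 // ler1n.
set w := 2^-1 *: z + (1 - 2^-1) *: z0.
have Cw := cC _ _ _ Cz Cz0 h2 h2'.
have Hw := cH z z0 _ h2 h2'.
have Fw := cF z z0 _ h2 h2'.
have Fwp := Fp w.
have mw := minz0 _ Cw.
rewrite -/w in Hw Fw mw.
have e2 : (1 - 2^-1 : R) = 2^-1 by field.
rewrite e2 in Hw Fw.
have Fw2 : F w ^+ 2 <= (2^-1 * F z + 2^-1 * F z0) ^+ 2 by nra.
have := ler_wpM2l (ltW ep) Fw2.
have := Fp z; have := Fp z0.
have i2 : (2^-1 : R) * 2 = 1 by field.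
nra.
Qed.
Lemma tube (R : realType) n m (C : set 'rV[R]_m) (g : 'rV[R]_n * 'rV[R]_m -> R)
  (y : 'rV[R]_n) (e : R) : compact C -> continuous g -> 0 < e ->
  \forall y' \near y, forall z, C z -> `|g (y', z) - g (y, z)| < e.
Proof.
move=> cC cg e0.
apply: ((compact_near_coveringP C).1 cC 'rV[R]_n (nbhs y)
   (fun y' z => `|g (y', z) - g (y, z)| < e)).
move=> z Cz.
have e20 : 0 < e / 2 by rewrite divr_gt0.
have H1 : \forall q \near (z, y), `|g (y, z) - g (q.2, q.1)| < e / 2.
  have c1 : {for (z, y), continuous (g \o (fun q : 'rV[R]_m * 'rV[R]_n => (q.2, q.1)))}.
    apply: continuous_comp; last exact: cg.
    apply: (@cvg_pair _ _ _ (nbhs (z, y)) (nbhs y) (nbhs z)); [exact: (@cvg_snd _ _ (nbhs z) (nbhs y)) | exact: (@cvg_fst _ _ (nbhs z) (nbhs y))].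
  by move/cvgrPdist_lt : c1 => /(_ _ e20).
have H2 : \forall z' \near z, `|g (y, z) - g (y, z')| < e / 2.
  have c1 : {for z, continuous (g \o (fun z' : 'rV[R]_m => (y, z')))}.
    apply: continuous_comp; last exact: cg.
    apply: (@cvg_pair _ _ _ (nbhs z) (nbhs y) (nbhs z)); [exact: cvg_cst | exact: cvg_id].
  by move/cvgrPdist_lt : c1 => /(_ _ e20).
have H2' : \forall q \near (z, y), `|g (y, z) - g (y, q.1)| < e / 2.
  exact: (@cvg_fst _ _ (nbhs z) (nbhs y) _ _ H2).
suff: \forall q \near (z, y), `|g (q.2, q.1) - g (y, q.1)| < e by [].
apply: (filterS2 _ _ H1 H2') => q.
rewrite !ltr_norml => /andP[a1 a2] /andP[b1 b2].
apply/andP; split; lra.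
Qed.
Theorem lemma2p3 (R : realType) (n m : nat)
  (K : set 'rV[R]_n) (C : set 'rV[R]_m)
  (f h : 'rV[R]_n * 'rV[R]_m -> R) (eps : R) :
  K !=set0 -> convex_set_rV K -> closed K -> bounded_set K ->
  C !=set0 -> convex_set_rV C -> closed C -> bounded_set C ->
  continuous f -> continuous h ->
  (forall y, K y -> convex_fun_rV (fun z => f (y, z))) ->
  (forall y, K y -> convex_fun_rV (fun z => h (y, z))) ->
  (forall p, 0 < f p) ->
  0 < eps ->
  exists v : 'rV[R]_n -> R,
    (forall y, K y ->
       [set f (y, x) | x in argmin_on C (fun z => h (y, z) + eps * (f (y, z)) ^+ 2)]
       = [set v y]) /\
    {within K, continuous v}.
Proof.
move=> K0 cK clK bK C0 cC clC bC cf ch fcvx hcvx fpos ep.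
have cg : continuous (fun p => h p + eps * f p ^+ 2).
  have -> : (fun p => h p + eps * f p ^+ 2) = (fun p => h p + eps * (f p * f p)).
    by apply: funext => p; rewrite expr2.
  move=> p; apply: cvgD; first exact: ch.
  apply: cvgM; first exact: cvg_cst.
  by apply: cvgM; exact: cf.
have compC : compact C := bounded_closed_compact bC clC.
have ex : forall y, exists z, argmin_on C (fun z => h (y, z) + eps * f (y, z) ^+ 2) z.
  move=> y.
  have cy : {within C, continuous (fun z => h (y, z) + eps * f (y, z) ^+ 2)}.
    apply: continuous_subspaceT => z.
    have c1 : {for z, continuous ((fun p => h p + eps * f p ^+ 2) \o (fun z' : 'rV[R]_m => (y, z')))}.
      apply: continuous_comp; last exact: cg.
      by apply: (@cvg_pair _ _ _ (nbhs z) (nbhs y) (nbhs z)); [exact: cvg_cst | exact: cvg_id].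
    exact: c1.
  have [c Cc minc] := EVT_min_rV C0 compC cy.
  exists c; split; first by move: Cc; rewrite inE.
  by move=> w Cw; apply: minc; rewrite inE.
have [zf hzf] := choice ex.
exists (fun y => f (y, zf y)); split.
  move=> y Ky; apply/seteqP; split => r.
    case=> x hx <- /=.
    have := @key_ineq _ _ C (fun z => f (y, z)) (fun z => h (y, z)) eps cC (fcvx y Ky) (hcvx y Ky) (fun z => fpos (y, z)) ep _ (hzf y) _ hx.1.
    have := hx.2 _ (hzf y).1.
    have := (hzf y).2 _ hx.1.
    move=> /= a b c.
    have h0 : eps * (f (y, x) - f (y, zf y)) ^+ 2 <= 0 by lra.
    rewrite (pmulr_rle0 _ ep) in h0.
    have : (f (y, x) - f (y, zf y)) ^+ 2 == 0 by rewrite eq_le h0 sqr_ge0.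
    by rewrite sqrf_eq0 subr_eq0 => /eqP.
  by move=> /= ->; exists (zf y).
apply/subspace_continuousP => y Ky.
apply/cvgrPdist_lt => e e0.
have eta0 : 0 < eps * e ^+ 2 / 16.
  by rewrite divr_gt0 // mulr_gt0 // exprn_gt0.
have T1 := @tube _ _ _ C _ y _ compC cg eta0.
have e20 : 0 < e / 2 by rewrite divr_gt0.
have T2 := @tube _ _ _ C _ y _ compC cf e20.
suff: \forall t \near y, K t -> `|f (y, zf y) - f (t, zf t)| < e by [].
apply: (filterS2 _ _ T1 T2) => t a b Kt.
have k := @key_ineq _ _ C (fun z => f (y, z)) (fun z => h (y, z)) eps cC (fcvx y Ky) (hcvx y Ky) (fun z => fpos (y, z)) ep _ (hzf y) _ (hzf t).1.
have mt := (hzf t).2 _ (hzf y).1.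
have a1 := a _ (hzf t).1.
have a0 := a _ (hzf y).1.
have b1 := b _ (hzf t).1.
move: k mt a1 a0 b1 => /=.
set z0 := zf y; set z1 := zf t.
rewrite !ltr_norml => k mt /andP[a1 a1'] /andP[a0 a0'] /andP[b1 b1'].
have hd2 : eps * (f (y, z1) - f (y, z0)) ^+ 2 < eps * (e / 2) ^+ 2 by lra.
have hd2' : (f (y, z1) - f (y, z0)) ^+ 2 < (e / 2) ^+ 2 by rewrite -(ltr_pM2l ep).
have hd : - (e / 2) < f (y, z1) - f (y, z0) < e / 2.
  by apply/andP; split; nra.
move: hd => /andP[? ?].
apply/andP; split; lra.
Qed.
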